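(* Let $\widetilde{\mathbf{A}}_2(p) \coloneqq \widetilde{\mathbf{P}}_- \, \widetilde{\mathbf{J}} \, \widetilde{\mathbf{D}}_p \, \widetilde{\mathbf{P}}_-$. Then \begin{align*} \widetilde{\mathbf{A}}_2(p) = e^{i2p} \widetilde{\mathbf{P}}_a + e^{-i2p} \widetilde{\mathbf{P}}_b + \widetilde{\mathbf{P}}_c \widetilde{\mathbf{A}}_2(p) \widetilde{\mathbf{P}}_c + \widetilde{\mathbf{P}}_d \widetilde{\mathbf{A}}_2(p) \widetilde{\mathbf{P}}_d , \end{align*} where $\widetilde{\mathbf{P}}_i$ denotes the orthogonal projector on $\widetilde{\mathcal{H}}_i$.
   Context: Setting: two fermions on a one-dimensional lattice, each with four internal (spinor) labels $1,2,3,4$. Consider the Hilbert space spanned by $\ket{e_i}\ket{y}$, $i=1,\dots,6$, $y\in\mathbb{Z}$, where $\ket{e_1}=\ket{1}\ket{4}$, $\ket{e_2}=\ket{3}\ket{2}$, $\ket{e_3}=\ket{3}\ket{4}$, $\ket{e_4}=\ket{4}\ket{1}$, $\ket{e_5}=\ket{2}\ket{3}$, $\ket{e_6}=\ket{4}\ket{3}$ are pairs of internal labels, $y=x_1-x_2$ is the relative coordinate (allowed to run over all of $\mathbb{Z}$), and $p\in[-\pi,\pi]$ is the total momentum (Fourier conjugate of $z=x_1+x_2$). Let $\lambda\in\mathbb{C}$ with $\sqrt2|\lambda|\neq 2n\pi$ ($n\in\mathbb{Z}$), and $\mathbf{T}_y\ket{y}=\ket{y+1}$. Define $\mathbf{O}'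 \coloneqq \begin{pmatrix}0&0&-\bar\lambda\\0&0&-\bar\lambda\\-\lambda&-\lambda&0\end{pmatrix}$ (in the basis $e_1,e_2,e_3$, and identically in $e_4,e_5,e_6$), $\widetilde{\mathbf{J}} \coloneqq \exp\left(-i \begin{pmatrix}\mathbf{O}'&\mathbf{0}\\ \mathbf{0}&\mathbf{O}'\end{pmatrix}\otimes \ket{0}\bra{0}\right)$, $\widetilde{\mathbf{D}}_p \coloneqq \mathrm{diag}(e^{2ip}, e^{-2ip}, \mathbf{T}_y^{\dagger 2}, e^{2ip}, e^{-2ip}, \mathbf{T}_y^{2})$ in the basis $e_1,\dots,e_6$, $\widetilde{\mathbf{P}}_- \coloneqq \frac12\left(\mathbf{I}\otimes\mathbf{I} - \begin{pmatrix}\mathbf{0}&\mathbf{I}\\ \mathbf{I}&\mathbf{0}\end{pmatrix}\otimes \sum_y \ket{-y}\bra{y}\right)$ (antisymmetrization: $e_i\leftrightarrow e_{i+3}$, $y\mapsto -y$). $\widetilde{\mathbf{A}}_2(p)$ is the fixed-total-momentum block of the two-particle evolution (free massless 1D Dirac step followed by a local quartic interaction with coupling $\lambda$). Subspaces: $\widetilde{\mathcal{H}}_a = \mathrm{span}\{\ket{e_1}\ket{y}-\ket{e_4}\ket{-y},\ y\neq0\}$, $\widetilde{\mathcal{H}}_b=\mathrm{span}\{\ket{e_2}\ket{y}-\ket{e_5}\ket{-y},\ y\neq 0\}$, $\widetilde{\mathcal{H}}_c=\mathrm{span}\{\ket{e_3}\ket{2y+1}-\ket{e_6}\ket{-2y-1},\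 y\in\mathbb{Z}\}$, $\widetilde{\mathcal{H}}_d = (\widetilde{\mathcal{H}}_a\oplus\widetilde{\mathcal{H}}_b\oplus\widetilde{\mathcal{H}}_c)^\perp$ within $\mathrm{supp}\,\widetilde{\mathbf{P}}_-$, so that $\mathrm{supp}\,\widetilde{\mathbf{P}}_- = \widetilde{\mathcal{H}}_a\oplus\widetilde{\mathcal{H}}_b\oplus\widetilde{\mathcal{H}}_c\oplus\widetilde{\mathcal{H}}_d$. *)

(* Defs.v *)
From HB Require Import structures.
From mathcomp Require Import all_boot all_order all_algebra.
From mathcomp Require Import complex.
From mathcomp Require Import all_classical all_reals all_analysis.
Set Implicit Arguments. Unset Strict Implicit. Unset Printing Implicit Defensive.
Import Order.TTheory GRing.Theory Num.Theory.
Import numFieldNormedType.Exports.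
Local Open Scope ring_scope.

Section TwoParticle.
Variable R : realType.
Local Notation C := R[i].

Definition expi (t : R) : C := Complex (cos t) (sin t).

Definition mexp (n : nat) (A : 'M[C]_n) : 'M[C]_n :=
  limn (series (fun k => (k`!%:R : C)^-1 *: A ^+ k)).

Definition Oprime (lam : C) : 'M[C]_3 :=
  \matrix_(i < 3, j < 3)
    (if (val i < 2)%N && (val j == 2%N) then - lam^*
     else if (val i == 2%N) && (val j < 2)%N then - lam
     else 0).

Definition Jmat (lam : C) : 'M[C]_3 := mexp (- (Complex 0 1) *: Oprime lam).

(* State space: wave functions psi(e_{k+1}, y), k : 'I_6, y : int.
   Index k = 0..5 stands for e_1..e_6. *)
Definition Vec := 'I_6 -> int -> C.

Definition swap6 (k : 'I_6) : 'I_6 := inord ((val k + 3) %% 6).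
Definition blk (k : 'I_6) : 'I_3 := inord (val k %% 3).
Definition inblk (k : 'I_6) (j : 'I_3) : 'I_6 := inord (val j + (3 <= val k) * 3).

(* J~ = exp(-i (O' (+) O') (x) |0><0|) = (I - |0><0|) + exp(-i(O' (+) O')) (x) |0><0| *)
Definition Jt (lam : C) (psi : Vec) : Vec := fun k y =>
  if y == 0 then \sum_(j < 3) Jmat lam (blk k) j * psi (inblk k j) 0
  else psi k y.

(* D~_p = diag(e^{2ip}, e^{-2ip}, T_y^{dagger 2}, e^{2ip}, e^{-2ip}, T_y^2),
   with T_y |y> = |y+1>, so (T psi)(y) = psi(y-1). *)
Definition Dt (p : R) (psi : Vec) : Vec := fun k y =>
  match val k with
  | 0%N | 3%N => expi (2 * p) * psi k y
  | 1%N | 4%N => expi (- (2 * p)) * psi k y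
  | 2%N => psi k (y + 2)
  | _ => psi k (y - 2)
  end.

Definition Pm (psi : Vec) : Vec := fun k y =>
  (psi k y - psi (swap6 k) (- y)) / 2%:R.

(* Orthogonal projectors onto H_a, H_b, H_c: for an orthogonal family
   v_{k,y} = |e_k>|y> - |e_{k+3}>|-y> (norm^2 = 2), P psi = sum v <v,psi>/2. *)
Definition Ppair (S : 'I_6 -> int -> bool) (psi : Vec) : Vec := fun k y =>
  if S k y then (psi k y - psi (swap6 k) (- y)) / 2%:R else 0.

Definition Pa : Vec -> Vec :=
  Ppair (fun k y => ((val k == 0%N) || (val k == 3%N)) && (y != 0)).
Definition Pb : Vec -> Vec :=
  Ppair (fun k y => ((val k == 1%N) || (val k == 4%N)) && (y != 0)).
Definition Pc : Vec -> Vec :=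
  Ppair (fun k y => ((val k == 2%N) || (val k == 5%N)) && odd `|y|%N).
(* projector onto H_d = (H_a (+) H_b (+) H_c)^perp inside supp P_- *)
Definition Pd (psi : Vec) : Vec := fun k y =>
  Pm psi k y - Pa psi k y - Pb psi k y - Pc psi k y.

Definition A2 (lam : C) (p : R) (psi : Vec) : Vec :=
  Pm (Jt lam (Dt p (Pm psi))).

End TwoParticle.

(* Main.v *)
Require Import Defs.
From HB Require Import structures.
From mathcomp Require Import all_boot all_order all_algebra.
From mathcomp Require Import complex.
From mathcomp Require Import all_classical all_reals all_analysis.
From mathcomp Require Import ring.
Import Order.TTheory GRing.Theory Num.Theory.
Local Open Scope ring_scope.

Lemma oddA (y : int) : odd (absz (y + 2)) = odd (absz y).
Proof.
have E (z : int) : odd (absz z) = ~~ (2 %| z)%Z by rewrite dvdzE dvdn2 negbK.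
by rewrite !E GRing.rpredDr // dvdzz.
Qed.
Lemma oddB (y : int) : odd (absz (y - 2)) = odd (absz y).
Proof.
have E (z : int) : odd (absz z) = ~~ (2 %| z)%Z by rewrite dvdzE dvdn2 negbK.
by rewrite !E GRing.rpredBr // dvdzz.
Qed.

Lemma val_swap6 (k : 'I_6) : nat_of_ord (swap6 k) = ((nat_of_ord k + 3) %% 6)%N.
Proof. by rewrite /swap6 inordK // ltn_mod. Qed.

Lemma swap6K (k : 'I_6) : swap6 (swap6 k) = k.
Proof. by apply/val_inj; rewrite /= !val_swap6; case: k => [[|[|[|[|[|[|k]]]]]] Hk]. Qed.

Definition anti {R : realType} (phi : Vec R) :=
  forall k y, phi (swap6 k) (- y) = - phi k y.

Definition symS (S : 'I_6 -> int -> bool) := forall k y, S (swap6 k) (- y) = S k y.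

Lemma Pm_anti (R : realType) (phi : Vec R) k y : anti phi -> Pm phi k y = phi k y.
Proof. by move=> A; rewrite /Pm A; field. Qed.

Lemma anti_Pm (R : realType) (psi : Vec R) : anti (Pm psi).
Proof. by move=> k y; rewrite /Pm swap6K opprK; field. Qed.

Lemma anti_Ppair (R : realType) S (psi : Vec R) : symS S -> anti (Ppair S psi).
Proof.
move=> hS k y; rewrite /Ppair hS swap6K opprK; case: (S k y) => //; last by rewrite oppr0.
by field.
Qed.

Lemma symSa : symS (fun (k : 'I_6) y => ((val k == 0%N) || (val k == 3%N)) && (y != 0)).
Proof. by move=> k y /=; rewrite val_swap6 oppr_eq0; case: k => [[|[|[|[|[|[|k]]]]]] Hk]. Qed.
Lemma symSb : symS (fun (k : 'I_6) y => ((val k == 1%N) || (val k == 4%N)) && (y != 0)).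
Proof. by move=> k y /=; rewrite val_swap6 oppr_eq0; case: k => [[|[|[|[|[|[|k]]]]]] Hk]. Qed.
Lemma symSc : symS (fun (k : 'I_6) (y : int) => ((val k == 2%N) || (val k == 5%N)) && odd `|y|%N).
Proof. by move=> k y /=; rewrite val_swap6 abszN; case: k => [[|[|[|[|[|[|k]]]]]] Hk]. Qed.

Definition Sa (k : 'I_6) (y : int) := ((val k == 0%N) || (val k == 3%N)) && (y != 0).
Definition Sb (k : 'I_6) (y : int) := ((val k == 1%N) || (val k == 4%N)) && (y != 0).
Definition Sc (k : 'I_6) (y : int) := ((val k == 2%N) || (val k == 5%N)) && odd `|y|%N.

Lemma anti_Pa (R : realType) (psi : Vec R) : anti (Pa psi).
Proof. exact: (@anti_Ppair R _ psi symSa). Qed.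
Lemma anti_Pb (R : realType) (psi : Vec R) : anti (Pb psi).
Proof. exact: (@anti_Ppair R _ psi symSb). Qed.
Lemma anti_Pc (R : realType) (psi : Vec R) : anti (Pc psi).
Proof. exact: (@anti_Ppair R _ psi symSc). Qed.
Lemma anti_Pd (R : realType) (psi : Vec R) : anti (Pd psi).
Proof.
move=> k y; rewrite /Pd anti_Pm anti_Pa anti_Pb anti_Pc; ring.
Qed.

Lemma Ppair_id (R : realType) S (phi : Vec R) k y : symS S -> anti phi ->
  (forall k y, ~~ S k y -> phi k y = 0) -> Ppair S phi k y = phi k y.
Proof.
move=> hS A Z; rewrite /Ppair; case: ifP => h; last by rewrite Z ?h.
by rewrite A; field.
Qed.

Lemma Ppair_0 (R : realType) S (phi : Vec R) k y : symS S ->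
  (forall k y, S k y -> phi k y = 0) -> Ppair S phi k y = 0.
Proof.
move=> hS Z; rewrite /Ppair; case: ifP => h //.
by rewrite !Z ?hS ?subr0 ?mul0r.
Qed.

Lemma Pm_zero (R : realType) S (phi : Vec R) k y : symS S ->
  (forall k y, S k y -> phi k y = 0) -> S k y -> Pm phi k y = 0.
Proof. by move=> hS Z h; rewrite /Pm !Z ?hS ?subr0 ?mul0r. Qed.

Lemma symC S : symS S -> symS (fun k y => ~~ S k y).
Proof. by move=> hS k y; rewrite hS. Qed.

Lemma Jt_ne0 (R : realType) lam (phi : Vec R) k y : y != 0 -> Jt lam phi k y = phi k y.
Proof. by move=> h; rewrite /Jt (negbTE h). Qed.

Lemma Jt_0 (R : realType) lam (phi : Vec R) k y : (forall k, phi k 0 = 0) ->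
  Jt lam phi k y = phi k y.
Proof.
move=> Z; rewrite /Jt; case: eqP => [->|//].
by rewrite Z big1 // => j _; rewrite Z mulr0.
Qed.



Lemma DtPa (R : realType) p (psi : Vec R) k y :
  Dt p (Pa psi) k y = expi (2 * p) * Pa psi k y.
Proof. by case: k => [[|[|[|[|[|[|?]]]]]] ?] //; rewrite /Dt /Pa /Ppair /= ?mulr0. Qed.
Lemma DtPb (R : realType) p (psi : Vec R) k y :
  Dt p (Pb psi) k y = expi (- (2 * p)) * Pb psi k y.
Proof. by case: k => [[|[|[|[|[|[|?]]]]]] ?] //; rewrite /Dt /Pb /Ppair /= ?mulr0. Qed.
Lemma DtPc (R : realType) p (psi : Vec R) k y :
  ~~ Sc k y -> Dt p (Pc psi) k y = 0.
Proof.
case: k => [[|[|[|[|[|[|?]]]]]] ?] //; rewrite /Dt /Pc /Ppair /Sc /= ?oddA ?oddB => h; try rewrite (negbTE h); by rewrite ?mulr0.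
Qed.

Lemma Pd_zero (R : realType) (psi : Vec R) k y :
  Sa k y || Sb k y || Sc k y -> Pd psi k y = 0.
Proof.
case: k => [[|[|[|[|[|[|?]]]]]] ?] //; rewrite /Pd /Pa /Pb /Pc /Ppair /Sa /Sb /Sc /= ?orbF => h; rewrite ?h /Pm.
all: ring.
Qed.

Definition vadd {R : realType} (f g : Vec R) : Vec R := fun k y => f k y + g k y.
Definition B {R : realType} lam p (phi : Vec R) : Vec R := Pm (Jt lam (Dt p phi)).

Lemma B_add (R : realType) lam p (f g : Vec R) k y :
  B lam p (vadd f g) k y = B lam p f k y + B lam p g k y.
Proof.
rewrite /B.
have -> : Dt p (vadd f g) = vadd (Dt p f) (Dt p g).
  apply/funext => k'; apply/funext => y'.
  by case: k' => [[|[|[|[|[|[|?]]]]]] ?] //; rewrite /Dt /vadd /= ?mulrDr.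
have -> : Jt lam (vadd (Dt p f) (Dt p g)) = vadd (Jt lam (Dt p f)) (Jt lam (Dt p g)).
  apply/funext => k'; apply/funext => y'; rewrite /Jt /vadd; case: ifP => _ //.
  by rewrite -big_split; apply: eq_bigr => j _; rewrite mulrDr.
by rewrite /Pm /vadd; field.
Qed.

Lemma B_Pa (R : realType) lam p (psi : Vec R) k y :
  B lam p (Pa psi) k y = expi (2 * p) * Pa psi k y.
Proof.
have Z : forall k', Dt p (Pa psi) k' 0 = 0.
  by move=> k'; rewrite DtPa /Pa /Ppair /= ?eqxx ?andbF mulr0.
rewrite /B /Pm !Jt_0 //.
by rewrite !DtPa anti_Pa; field.
Qed.

Lemma B_Pb (R : realType) lam p (psi : Vec R) k y :
  B lam p (Pb psi) k y = expi (- (2 * p)) * Pb psi k y.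
Proof.
have Z : forall k', Dt p (Pb psi) k' 0 = 0.
  by move=> k'; rewrite DtPb /Pb /Ppair /= ?eqxx ?andbF mulr0.
rewrite /B /Pm !Jt_0 //.
by rewrite !DtPb anti_Pb; field.
Qed.

Lemma B_Pc (R : realType) lam p (psi : Vec R) k y :
  Pc (B lam p (Pc psi)) k y = B lam p (Pc psi) k y.
Proof.
rewrite /Pc (@Ppair_id _ _ _ _ _ symSc) //; first exact: anti_Pm.
move=> k' y' h; rewrite /B; apply: (@Pm_zero _ _ _ _ _ (@symC _ symSc)) => // k'' y'' h''.
rewrite Jt_0; first exact: DtPc.
by move=> k3; apply: DtPc; rewrite /Sc /= andbF.
Qed.

Lemma Sany_ne0 k y : Sa k y || Sb k y || Sc k y -> y != 0.
Proof. by case: eqP => // ->; rewrite /Sa /Sb /Sc /= !andbF. Qed.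

Lemma Z_zero (R : realType) lam p (psi : Vec R) k y :
  Sa k y || Sb k y || Sc k y -> Jt lam (Dt p (Pd psi)) k y = 0.
Proof.
move=> h; rewrite Jt_ne0; last by move: h; case: eqP => // ->; rewrite /Sa /Sb /Sc /= !andbF.
have HY : forall k y, Sa k y || Sb k y || Sc k y -> Pd psi k y = 0 by move=> *; exact: Pd_zero.
move: (Pd psi) HY => Y HY.
move: h; case: k => [[|[|[|[|[|[|?]]]]]] ?] // h; rewrite /Dt /= HY ?mulr0 //;
  by move: h; rewrite /Sa /Sb /Sc /= ?oddA ?oddB.
Qed.

Lemma B_Pd (R : realType) lam p (psi : Vec R) k y :
  Pd (B lam p (Pd psi)) k y = B lam p (Pd psi) k y.
Proof.
set X := B lam p (Pd psi).
rewrite {1}/Pd Pm_anti; last exact: anti_Pm.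
rewrite /Pa (@Ppair_0 _ _ _ _ _ symSa); last first.
  by move=> k' y' h; rewrite /B; apply: (@Pm_zero _ _ _ _ _ symSa) => // k'' y'' h''; apply: Z_zero; rewrite /Sa /Sb /Sc h'' ?orbT.
rewrite /Pb (@Ppair_0 _ _ _ _ _ symSb); last first.
  by move=> k' y' h; rewrite /B; apply: (@Pm_zero _ _ _ _ _ symSb) => // k'' y'' h''; apply: Z_zero; rewrite /Sa /Sb /Sc h'' ?orbT.
rewrite /Pc (@Ppair_0 _ _ _ _ _ symSc); last first.
  by move=> k' y' h; rewrite /B; apply: (@Pm_zero _ _ _ _ _ symSc) => // k'' y'' h''; apply: Z_zero; rewrite /Sa /Sb /Sc h'' ?orbT.
by rewrite !subr0.
Qed.

Theorem lemma1 (R : realType) (lam : R[i]) (p : R)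
  (hlam : forall n : int, Num.sqrt 2 * Normc.normc lam != 2 * n%:~R * pi)
  (hp : - pi <= p <= pi) :
  forall (psi : Vec R) (k : 'I_6) (y : int),
    A2 lam p psi k y =
      expi (2 * p) * Pa psi k y + expi (- (2 * p)) * Pb psi k y
      + Pc (A2 lam p (Pc psi)) k y + Pd (A2 lam p (Pd psi)) k y.
Proof.
move=> psi k y.
have PmE : Pm psi = vadd (vadd (vadd (Pa psi) (Pb psi)) (Pc psi)) (Pd psi).
  by apply/funext => k'; apply/funext => y'; rewrite /vadd /Pd; ring.
have PmPc : Pm (Pc psi) = Pc psi.
  by apply/funext => k'; apply/funext => y'; rewrite Pm_anti //; exact: anti_Pc.
have PmPd : Pm (Pd psi) = Pd psi.
  by apply/funext => k'; apply/funext => y'; rewrite Pm_anti //; exact: anti_Pd.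
rewrite /A2 PmE PmPc PmPd.
change (B lam p (vadd (vadd (vadd (Pa psi) (Pb psi)) (Pc psi)) (Pd psi)) k y =
  expi (2 * p) * Pa psi k y + expi (- (2 * p)) * Pb psi k y +
  Pc (B lam p (Pc psi)) k y + Pd (B lam p (Pd psi)) k y).
by rewrite B_Pc B_Pd B_add (@B_add _ lam p (vadd (Pa psi) (Pb psi)) (Pc psi)) (@B_add _ lam p (Pa psi) (Pb psi)) B_Pa B_Pb.
Qed.
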